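(* Let $\mathfrak g$ be a finite-dimensional nilpotent Lie algebra over a field $k$ of characteristic zero, and let $x\cdot y$ be an LR-structure on $\mathfrak g$. Then there exists a complete LR-structure $x\circ y$ on $\mathfrak g$ such that $\mathfrak g\circ\mathfrak g\subseteq \mathfrak g\cdot\mathfrak g$, where $\mathfrak g\circ\mathfrak g$ and $\mathfrak g\cdot\mathfrak g$ denote the linear spans of all products $x\circ y$, respectively $x\cdot y$, with $x,y\in\mathfrak g$.
   Context: An LR-algebra is a vector space $A$ with a bilinear product $\cdot$ satisfying $x\cdot(y\cdot z)=y\cdot(x\cdot z)$ and $(x\cdot y)\cdot z=(x\cdot z)\cdot y$ for all $x,y,z\in A$. An LR-structure on a Lie algebra $\mathfrak g$ is an LR-algebra product on the underlying vector space of $\mathfrak g$ such that $x\cdot y-y\cdot x=[x,y]$ for all $x,y$. An LR-structure is complete if all right multiplications $R(x)\colon y\mapsto y\cdot x$ are nilpotent. *)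

(* Defs.v *)
From HB Require Import structures.
From mathcomp Require Import all_boot all_order all_algebra.
Set Implicit Arguments. Unset Strict Implicit. Unset Printing Implicit Defensive.
Import GRing.Theory.
Local Open Scope ring_scope.

Section LR.
Variables (F : fieldType) (V : vectType F).

Definition bilinear_prod (m : V -> V -> V) : Prop :=
  (forall (a : F) (x y z : V), m (a *: x + y) z = a *: m x z + m y z) /\
  (forall (a : F) (x y z : V), m z (a *: x + y) = a *: m z x + m z y).

Definition is_lie_bracket (br : V -> V -> V) : Prop :=
  [/\ bilinear_prod br,
      (forall x, br x x = 0) &
      (forall x y z, br x (br y z) + br y (br z x) + br z (br x y) = 0)].

Definition in_prod_span (m : V -> V -> V) (v : V) : Prop :=
  exists (n : nat) (a : 'I_n -> F) (x y : 'I_n -> V),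
    v = \sum_(i < n) a i *: m (x i) (y i).

Fixpoint in_lcs (br : V -> V -> V) (i : nat) (v : V) : Prop :=
  match i with
  | 0 => True
  | j.+1 => exists (n : nat) (a : 'I_n -> F) (x y : 'I_n -> V),
      (forall k, in_lcs br j (y k)) /\
      v = \sum_(k < n) a k *: br (x k) (y k)
  end.

Definition lie_nilpotent (br : V -> V -> V) : Prop :=
  exists i, forall v, in_lcs br i v -> v = 0.

Definition is_LR_algebra (m : V -> V -> V) : Prop :=
  [/\ bilinear_prod m,
      (forall x y z, m x (m y z) = m y (m x z)) &
      (forall x y z, m (m x y) z = m (m x z) y)].

Definition is_LR_structure (br : V -> V -> V) (m : V -> V -> V) : Prop :=
  is_LR_algebra m /\ (forall x y, m x y - m y x = br x y).

Definition LR_complete (m : V -> V -> V) : Prop :=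
  forall x, exists n, forall y, iter n (fun z => m z x) y = 0.

End LR.

(* Main.v *)
Require Import Defs.
From HB Require Import structures.
From mathcomp Require Import all_boot all_order all_algebra.
From Stdlib Require Import Classical ClassicalEpsilon.
Import GRing.Theory.
Local Open Scope ring_scope.
Set Implicit Arguments. Unset Strict Implicit.

Section P.
Variables (F : fieldType) (V : vectType F).
Definition linP (g : V -> V) := forall (a : F) (x y : V), g (a *: x + y) = a *: g x + g y.
Definition mkL g (h : linP g) : {linear V -> V} := HB.pack g (GRing.isLinear.Build F V V *:%R g h).
Lemma linfunP g : linP g -> linfun g =1 g.
Proof. move=> h x; exact: (lfunE (mkL h)). Qed.
Lemma lin0 g : linP g -> g 0 = 0.
Proof. move=> h; exact: (linear0 (mkL h)). Qed.
Lemma linD g : linP g -> forall x y, g (x + y) = g x + g y.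
Proof. move=> h; exact: (linearD (mkL h)). Qed.
Lemma linZ g : linP g -> forall a x, g (a *: x) = a *: g x.
Proof. move=> h a x; by rewrite -[a *: x]addr0 h (lin0 h) addr0. Qed.
Lemma linB g : linP g -> forall x y, g (x - y) = g x - g y.
Proof. move=> h; exact: (linearB (mkL h)). Qed.
Lemma linN g : linP g -> forall x, g (- x) = - g x.
Proof. move=> h; exact: (linearN (mkL h)). Qed.
Lemma lin_sum g : linP g -> forall n (f : 'I_n -> V), g (\sum_(i < n) f i) = \sum_(i < n) g (f i).
Proof. move=> h n f; exact: (linear_sum (mkL h)). Qed.
Lemma lin_iter g : linP g -> forall n, linP (iter n g).
Proof. move=> h; elim=> [|n IH] a x y //=; by rewrite IH h. Qed.
End P.

Section Main.
Variables (F : fieldType) (V : vectType F).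
Variables (br m : V -> V -> V).
Hypothesis mL : forall z, linP (fun x => m x z).
Hypothesis mR : forall z, linP (m z).
Hypothesis lcomm : forall x y z, m x (m y z) = m y (m x z).
Hypothesis rcomm : forall x y z, m (m x y) z = m (m x z) y.
Hypothesis hbr : forall x y, m x y - m y x = br x y.
Lemma mD1 a b c : m (a + b) c = m a c + m b c.
Proof. exact: (linD (mL c)). Qed.
Lemma mD2 a b c : m c (a + b) = m c a + m c b.
Proof. exact: (linD (mR c)). Qed.
Hypothesis hnil : exists i, forall v, in_lcs br i v -> v = 0.

Definition spanU (U : {vspace V}) v := exists n (a : 'I_n -> F) (x y : 'I_n -> V),
  [/\ forall i, x i \in U, forall i, y i \in U & v = \sum_(i < n) a i *: m (x i) (y i)].

Lemma spanU_prod (U : {vspace V}) (x y : V) : x \in U -> y \in U -> spanU U (m x y).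
Proof.
move=> hx hy; exists 1%N, (fun=> 1), (fun=> x), (fun=> y); split => //.
by rewrite big_ord1 scale1r.
Qed.

Lemma spanU_add (U : {vspace V}) (u v : V) : spanU U u -> spanU U v -> spanU U (u + v).
Proof.
case=> n [a [x [y [hx hy ->]]]]; case=> n' [a' [x' [y' [hx' hy' ->]]]].
pose f (T : Type) (g : 'I_n -> T) (g' : 'I_n' -> T) (i : 'I_(n + n')) :=
  match split i with inl j => g j | inr j => g' j end.
have sl : forall i, split (lshift n' i) = inl i := fun i => unsplitK (inl _ i).
have sr : forall i, split (rshift n i) = inr i := fun i => unsplitK (inr _ i).
exists (n + n')%N, (f _ a a'), (f _ x x'), (f _ y y'); split.
- by move=> i; rewrite /f; case: (split i).
- by move=> i; rewrite /f; case: (split i).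
rewrite big_split_ord /=; congr (_ + _); apply: eq_bigr => i _; by rewrite /f ?sl ?sr.
Qed.

Lemma spanU_sub (K U : {vspace V}) v : (K <= U)%VS -> spanU K v -> spanU U v.
Proof.
move=> /subvP s [n [a [x [y [hx hy ->]]]]]; exists n, a, x, y; split => // i; exact: s.
Qed.

Lemma spanU_zero (U : {vspace V}) (x v : V) : (forall u w, u \in U -> w \in U -> m x (m u w) = 0) ->
  spanU U v -> m x v = 0.
Proof.
move=> h [n [a [x' [y [hx hy ->]]]]]; rewrite (lin_sum (mR x)) big1 // => i _.
by rewrite (linZ (mR x)) h ?scaler0.
Qed.

Lemma lcs_step i (v : V) (s : F) (y : V) : in_lcs br i v -> in_lcs br i.+1 (s *: br y v).
Proof.
move=> h; exists 1%N, (fun=> s), (fun=> y), (fun=> v); split => //.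
by rewrite big_ord1.
Qed.

Lemma ad_nil : exists N, forall y v j, (N <= j)%N ->
  iter j (fun w => (-1) *: br y w) v = 0.
Proof.
case: hnil => N hN; exists N => y v j hj.
rewrite -(subnKC hj) iterD; apply: hN.
clear hj; elim: N (iter (j - N) _ v) => [|N IH] w //=.
exact: lcs_step.
Qed.


Record good (U : {vspace V}) (c : V -> V -> V) : Prop := Good {
 g_in : forall x y, x \in U -> y \in U -> c x y \in U;
 g_span : forall x y, x \in U -> y \in U -> spanU U (c x y);
 g_linl : forall a x y z, x \in U -> y \in U -> z \in U -> c (a *: x + y) z = a *: c x z + c y z;
 g_linr : forall a x y z, x \in U -> y \in U -> z \in U -> c z (a *: x + y) = a *: c z x + c z y;
 g_lc : forall x y z, x \in U -> y \in U -> z \in U -> c x (c y z) = c y (c x z);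
 g_rc : forall x y z, x \in U -> y \in U -> z \in U -> c (c x y) z = c (c x z) y;
 g_anti : forall x y, x \in U -> y \in U -> c x y - c y x = m x y - m y x;
 g_cpl : forall y, y \in U -> exists k, forall j x, (k <= j)%N -> x \in U ->
     iter j (fun z => c z y) x = 0 }.

Definition closed (U : {vspace V}) := forall x y, x \in U -> y \in U -> m x y \in U.

Lemma iter0 (g : V -> V) n : g 0 = 0 -> iter n g 0 = 0.
Proof. by move=> h; elim: n => //= n ->. Qed.

Lemma caseA (U : {vspace V}) : closed U ->
  (forall e x, e \in U -> x \in U -> iter (\dim U) (fun z => m z e) x = 0) -> good U m.
Proof.
move=> hcl hA; split.
- exact: hcl.
- exact: spanU_prod.
- by move=> a x y z *; apply: mL.
- by move=> a x y z *; apply: mR.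
- by move=> *; apply: lcomm.
- by move=> *; apply: rcomm.
- by [].
move=> y hy; exists (\dim U) => j x hj hx.
by rewrite -(subnK hj) iterD hA // iter0 // (lin0 (mL y)).
Qed.

Lemma strict (A B : {vspace V}) : (A <= B)%VS -> ~~ (B <= A)%VS -> (\dim A < \dim B)%N.
Proof.
move=> sAB nBA; rewrite (ltn_leqif (dimv_leqif_eq sAB)).
by apply: contra nBA => /eqP ->; exact: subvv.
Qed.


Section Fit.
Variables (U : {vspace V}) (e : V).
Hypothesis hcl : closed U.
Hypothesis he : e \in U.

Let N := \dim U.
Let T := fun z => m z e.
Let linT : linP T := mL e.
Let linTj j : linP (iter j T) := lin_iter linT j.

Lemma iterU j z : z \in U -> iter j T z \in U.
Proof. by move=> hz; elim: j => //= j IH; exact: hcl. Qed.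

Definition Im j := (linfun (iter j T) @: U)%VS.

Lemma memIm j w : reflect (exists2 u, u \in U & w = iter j T u) (w \in Im j).
Proof.
apply: (iffP memv_imgP) => -[u hu hw]; exists u => //; by rewrite hw linfunP.
Qed.

Lemma ImU j : (Im j <= U)%VS.
Proof. by apply/subvP => w /memIm [u hu ->]; exact: iterU. Qed.

Lemma ImS j : (Im j.+1 <= Im j)%VS.
Proof.
apply/subvP => w /memIm [u hu ->]; apply/memIm; exists (T u); last by rewrite iterSr.
exact: hcl.
Qed.

Lemma ImStab j : (Im j <= Im j.+1)%VS -> (Im j.+1 <= Im j.+2)%VS.
Proof.
move=> /subvP h; apply/subvP => w /memIm [u hu ->]; rewrite iterS.
have /h /memIm [u' hu' ->] : iter j T u \in Im j by apply/memIm; exists u.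
by apply/memIm; exists u' => //; rewrite iterS.
Qed.

Lemma chain j : (Im j <= Im j.+1)%VS || (\dim (Im j.+1) + j.+1 <= N)%N.
Proof.
elim: j => [|j IH].
  case: (boolP (Im 0 <= Im 1)%VS) => //= h.
  rewrite addn1; apply: strict; first exact: ImU.
  by apply: contra h => h'; apply: subv_trans h'; exact: ImU.
case/orP: IH => [h|h]; first by rewrite ImStab.
case: (boolP (Im j.+1 <= Im j.+2)%VS) => //= h2.
have := strict (ImS j.+1) h2; rewrite -ltnS => h3.
by rewrite addnS; apply: leq_trans h; rewrite ltn_add2r.
Qed.

Lemma stabN : (Im N <= Im N.+1)%VS.
Proof.
have /orP [//|] := chain N.
by rewrite addnS ltnNge leq_addl.
Qed.

Lemma stab k : (Im N <= Im (N + k))%VS.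
Proof.
have H : forall k', (Im (N + k') <= Im (N + k').+1)%VS.
  by elim=> [|k' IH]; [rewrite addn0; exact: stabN | rewrite addnS; exact: ImStab].
elim: k => [|k IH]; first by rewrite addn0 subvv.
by rewrite addnS; apply: subv_trans IH (H k).
Qed.

Definition Kf := (U :&: lker (linfun (iter N T)))%VS.
Definition If := Im N.

Lemma memK w : (w \in Kf) = (w \in U) && (iter N T w == 0).
Proof. by rewrite memv_cap memv_ker linfunP. Qed.

Lemma KI0vec w : w \in If -> iter N T w = 0 -> w = 0.
Proof.
move=> hw h0.
set f := linfun (iter N T).
have hsub : (If <= f @: If)%VS.
  apply/subvP => v hv.
  have /subvP /(_ v hv) /memIm [u hu ->] := stab N.
  rewrite iterD -linfunP //; apply: memv_img; apply/memIm; by exists u.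
have := limg_ker_dim f If.
have := dimvS hsub => hle hdim.
have : \dim (If :&: lker f) == 0%N.
  by rewrite -leqn0 -(leq_add2r (\dim (f @: If))) hdim add0n.
rewrite dimv_eq0 => /eqP hc.
have : w \in (If :&: lker f)%VS.
  rewrite memv_cap hw /= memv_ker /f (linfunP (linTj N)) h0 //.
move=> hw0; have : w \in (0 : {vspace V})%VS by rewrite -hc.
by rewrite memv0 => /eqP.
Qed.


Lemma IU0 w : w \in If -> w \in U.
Proof. by move/(subvP (ImU N)). Qed.

Lemma KU0 w : w \in Kf -> w \in U.
Proof. by rewrite memK => /andP []. Qed.

Lemma decomp x : x \in U -> exists2 x1, x1 \in If & x - x1 \in Kf.
Proof.
move=> hx.
have : iter N T x \in Im (N + N) by apply: (subvP (stab N)); apply/memIm; exists x.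
case/memIm => u hu hEq.
exists (iter N T u); first by apply/memIm; exists u.
rewrite memK memvB ?iterU //= (linB (linTj N)) hEq iterD subrr.
by [].
Qed.

Lemma F3 w : w \in If -> exists2 w', w' \in If & w = T w'.
Proof.
move=> hw; have := subvP (stab 1) w hw; rewrite addn1 => /memIm [u hu ->].
by exists (iter N T u); [apply/memIm; exists u | rewrite iterS].
Qed.

Lemma iter_m j a b : iter j T (m a b) = m (iter j T a) b.
Proof. by elim: j => //= j ->; rewrite /T rcomm. Qed.

Lemma KU a b : a \in Kf -> b \in U -> m a b \in Kf.
Proof.
rewrite !memK => /andP [ha /eqP h0] hb.
by rewrite hcl //= iter_m h0 (lin0 (mL b)).
Qed.

Lemma IU a b : a \in If -> b \in U -> m a b \in If.
Proof.
move=> /memIm [u hu ->] hb; apply/memIm; exists (m u b); first exact: hcl.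
by rewrite iter_m.
Qed.

Lemma KI0 a b : a \in Kf -> b \in If -> m a b = 0.
Proof.
move=> ha hb; have [b' hb' Eb] := F3 hb.
apply: (@KI0vec (m a b)).
  by rewrite Eb /T lcomm; apply: IU => //; apply: hcl => //; exact: KU0.
by have := KU ha (IU0 hb); rewrite memK => /andP [_ /eqP].
Qed.

Lemma Ccomm x w z : m x (m (m w e) z) = m (m x (m w e)) z.
Proof. by rewrite rcomm lcomm [in RHS]lcomm rcomm. Qed.

Lemma Icomm a b : a \in If -> b \in If -> m a b = m b a.
Proof.
move=> ha hb; have [a' _ ->] := F3 ha; have [b' _ Eb] := F3 hb.
rewrite /T lcomm rcomm Eb /T; symmetry; exact: Ccomm.
Qed.

Lemma IKnil y : y \in Kf -> exists k, forall j a, (k <= j)%N -> a \in If ->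
   iter j (fun z => m z y) a = 0.
Proof.
move=> hy; case: ad_nil => k hk; exists k => j a hj ha.
have : forall i, iter i (fun z => m z y) a = iter i (fun w => (-1) *: br y w) a
    /\ iter i (fun z => m z y) a \in If.
  elim=> [|i [IH1 IH2]] //=; split; last by apply: IU => //; exact: KU0.
  rewrite -IH1 -hbr (KI0 hy IH2) sub0r scaleN1r opprK //.
by case/(_ j) => -> _; exact: hk.
Qed.


Lemma pi_ex : exists p : V -> V, forall x, x \in U -> p x \in Kf /\ x - p x \in If.
Proof.
have H : forall x, exists y, x \in U -> y \in Kf /\ x - y \in If.
  move=> x; case: (boolP (x \in U)) => hx; last by exists 0.
  have [x1 h1 h2] := decomp hx; exists (x - x1) => _; split => //; by rewrite subKr.
exists (fun x => proj1_sig (constructive_indefinite_description _ (H x))) => x hx.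
exact: (proj2_sig (constructive_indefinite_description _ (H x)) hx).
Qed.

Lemma pi_uniq (p : V -> V) : (forall x, x \in U -> p x \in Kf /\ x - p x \in If) ->
  forall x a, x \in U -> a \in Kf -> x - a \in If -> p x = a.
Proof.
move=> hp x a hx ha hxa; have [h1 h2] := hp x hx.
apply/eqP; rewrite -subr_eq0; apply/eqP; apply: KI0vec.
  have -> : p x - a = (x - a) - (x - p x) by rewrite opprB [RHS]addrC addrA subrK.
  exact: memvB.
by have := memvB h1 ha; rewrite memK => /andP [_ /eqP].
Qed.


Lemma scal_alg (a : F) (x px y py : V) : (a *: x + y) - (a *: px + py) = a *: (x - px) + (y - py).
Proof. by rewrite scalerBr opprD addrACA. Qed.

Lemma stepB x0 : x0 \in U -> iter N T x0 != 0 ->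
  (forall K, closed K -> (\dim K < \dim U)%N -> exists c, good K c) ->
  exists c, good U c.
Proof.
move=> hx0 hT IH.
have [p hp] := pi_ex.
have pu := pi_uniq hp.
have clK : closed Kf by move=> a b ha hb; apply: KU ha (KU0 hb).
have dK : (\dim Kf < \dim U)%N.
  apply: strict; first exact: capvSl.
  apply/negP => /subvP /(_ x0 hx0); by rewrite memK hx0 (negbTE hT).
have [cK gK] := IH _ clK dK.
have pK x : x \in U -> p x \in Kf by move=> hx; case: (hp x hx).
have qI x : x \in U -> x - p x \in If by move=> hx; case: (hp x hx).
have pU x : x \in U -> p x \in U by move=> hx; exact: KU0 (pK x hx).
have qU x : x \in U -> x - p x \in U by move=> hx; exact: IU0 (qI x hx).
have sKU : (Kf <= U)%VS by exact: capvSl.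
pose c := fun x y => cK (p x) (p y) + m (x - p x) (p y).
have cU x y : x \in U -> y \in U -> c x y \in U.
  move=> hx hy; apply: memvD; first by apply: KU0; apply: (g_in gK); auto.
  by apply: hcl; auto.
have pc x y : x \in U -> y \in U -> p (c x y) = cK (p x) (p y).
  move=> hx hy; apply: pu; first exact: cU.
    by apply: (g_in gK); auto.
  by rewrite /c addrC addKr; apply: IU; auto.
have qc x y : x \in U -> y \in U -> c x y - p (c x y) = m (x - p x) (p y).
  by move=> hx hy; rewrite pc // /c addrC addKr.
have plin a x y : x \in U -> y \in U -> p (a *: x + y) = a *: p x + p y.
  move=> hx hy; apply: pu.
  - by rewrite memvD ?memvZ.
  - by rewrite memvD ?memvZ ?pK.
  by rewrite scal_alg memvD ?memvZ ?qI.
exists c; split.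
- exact: cU.
- move=> x y hx hy; apply: spanU_add.
    by apply: (spanU_sub sKU); apply: (g_span gK); auto.
  by apply: spanU_prod; auto.
- move=> a x y z hx hy hz; rewrite /c plin // scal_alg (g_linl gK) ?pK //.
  rewrite (mL (p z)) scalerDr addrACA //.
- move=> a x y z hx hy hz; rewrite /c plin // (g_linr gK) ?pK //.
  rewrite (mR (z - p z)) scalerDr addrACA //.
- move=> x y z hx hy hz; rewrite /c.
  have := pc y z hy hz; rewrite /c => ->.
  have := pc x z hx hz; rewrite /c => ->.
  have z0 : forall u, u \in U -> forall v, spanU Kf v -> m (u - p u) v = 0.
    move=> u hu v; apply: spanU_zero => a b ha hb.
    by rewrite lcomm (KI0 ha) //; apply: IU; [exact: qI | exact: KU0].
  rewrite !z0 ?addr0 //; try by apply: (g_span gK); auto.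
  by rewrite (g_lc gK); auto.
- move=> x y z hx hy hz.
  have E : forall x y z, x \in U -> y \in U -> c (c x y) z =
     cK (cK (p x) (p y)) (p z) + m (m (x - p x) (p y)) (p z).
    move=> x' y' z' hx' hy'.
    have -> : c (c x' y') z' = cK (p (c x' y')) (p z') + m (c x' y' - p (c x' y')) (p z') by [].
    by rewrite qc // pc.
  by rewrite !E // rcomm (g_rc gK); auto.
- move=> x y hx hy; rewrite /c.
  have ha0 := pK x hx; have hb0 := pK y hy; have ha1 := qI x hx; have hb1 := qI y hy.
  set a0 := p x in ha0 *; set b0 := p y in hb0 *.
  set a1 := x - a0 in ha1 *; set b1 := y - b0 in hb1 *.
  have ex : x = a0 + a1 by rewrite /a1 addrC subrK.
  have ey : y = b0 + b1 by rewrite /b1 addrC subrK.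
  rewrite opprD addrACA (g_anti gK) //.
  clearbody a1 b1 a0 b0.
  rewrite [in RHS]ex [in RHS]ey !mD1 !mD2 (KI0 ha0 hb1) (KI0 hb0 ha1) (Icomm ha1 hb1).
  rewrite !addr0 [in RHS]opprD [RHS]addrACA; congr (_ + _).
  by rewrite [m b1 a0 + _]addrC addrKA.
- move=> y hy; have hpy := pK y hy.
  have [k1 H1] := g_cpl gK hpy; have [k2 H2] := IKnil hpy.
  exists (k1 + k2)%N => j x hj hx.
  have E : forall i, iter i (fun z => c z y) x =
      iter i (fun z => cK z (p y)) (p x) + iter i (fun z => m z (p y)) (x - p x) /\
      iter i (fun z => cK z (p y)) (p x) \in Kf /\
      iter i (fun z => m z (p y)) (x - p x) \in If.
    elim=> [|i [IH1 [IH2 IH3]]] /=.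
      split; first by rewrite addrC subrK.
      by split; [apply: pK | apply: qI].
    rewrite IH1; move: (iter i _ (p x)) (iter i _ (x - p x)) IH2 IH3 => A B IH2 IH3.
    have hAB : A + B \in U by apply: memvD; [exact: KU0 | exact: IU0].
    have pAB : p (A + B) = A by apply: pu => //; rewrite addrC addKr.
    have qAB : A + B - A = B by rewrite addrC addKr.
    rewrite /c pAB qAB; split => //; split.
      by apply: (g_in gK).
    by apply: IU => //; exact: pU.
  have [-> _] := E j.
  rewrite H1 ?H2 ?addr0 ?qI ?pK //.
  - exact: leq_trans (leq_addl _ _) hj.
  - exact: leq_trans (leq_addr _ _) hj.
Qed.

End Fit.


Lemma step U : closed U ->
  (forall K, closed K -> (\dim K < \dim U)%N -> exists c, good K c) ->
  exists c, good U c.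
Proof.
move=> hcl IH.
case: (classic (forall e x, e \in U -> x \in U ->
   iter (\dim U) (fun z => m z e) x = 0)) => [hA|hB].
  by exists m; exact: caseA.
have [e [x [he [hx hT]]]] : exists e x, [/\ e \in U, x \in U &
    iter (\dim U) (fun z => m z e) x != 0].
  apply: NNPP => H; apply: hB => e x he hx; apply: NNPP => H2; apply: H.
  by exists e, x; split => //; apply/eqP.
exact: (stepB hcl he hx hT IH).
Qed.

Lemma mainU n : forall U, (\dim U <= n)%N -> closed U -> exists c, good U c.
Proof.
elim: n => [|n IHn] U hd hcl; apply: step => // K hK hKU.
  by move: (leq_trans hKU hd).
by apply: IHn => //; rewrite -ltnS; exact: leq_trans hKU hd.
Qed.

End Main.

Theorem mainTheorem4 (F : fieldType) (V : vectType F) (br : V -> V -> V)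
  (hchar : [pchar F] =i pred0)
  (hlie : is_lie_bracket br) (hnil : lie_nilpotent br)
  (dot : V -> V -> V) (hdot : is_LR_structure br dot) :
  exists circ : V -> V -> V,
    [/\ is_LR_structure br circ, LR_complete circ &
        forall x y : V, in_prod_span dot (circ x y)].
Proof.
case: hdot => -[[mL mR] lc rc] hb.
have hcl : closed dot (fullv : {vspace V}) by move=> x y _ _; exact: memvf.
have mL' : forall z, linP (fun x => dot x z) by move=> z a x y; exact: mL.
have mR' : forall z, linP (dot z) by move=> z a x y; exact: mR.
have [c gc] := mainU mL' mR' lc rc hb hnil (leqnn _) hcl.
exists c; split.
- split; last by move=> x y; rewrite (g_anti gc) ?memvf.
  split.
  + by split => a x y z; [rewrite (g_linl gc) | rewrite (g_linr gc)]; rewrite ?memvf.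
  + by move=> x y z; rewrite (g_lc gc) ?memvf.
  + by move=> x y z; rewrite (g_rc gc) ?memvf.
- move=> y; have [k hk] := g_cpl gc (memvf y).
  by exists k => x; apply: hk; rewrite ?memvf.
move=> x y; have [n [a [x' [y' [_ _ ->]]]]] := g_span gc (memvf x) (memvf y).
by exists n, a, x', y'.
Qed.
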